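(* Fix $\theta\in\mathbb{R}$ (playing the role of $at$). There exists $C>0$ such that for every grid size $N\in\mathbb{N}$ there exists a ReLU FNO $\mathcal{N}^{\mathrm{FNO}}$ with $k_{\max}=1$, $d_v\le C$, depth $\le C$, size $\le C$ such that \[ \sup_{h,w,\xi}\sup_{x\in\mathbb{T}}\big|\mathcal{N}^{\mathrm{FNO}}(\bar u)(x)-\sin(w/2)\cos(x-\xi-\theta)\big|\le\frac CN, \] where $\bar u=h\,1_{[-w/2,w/2]}(\cdot-\xi)$ and the supremum is over $h\in[\underline h,\overline h]$, $w\in[\underline w,\overline w]$, $\xi\in[0,2\pi]$.
   Context: $\mathbb{T}=\mathbb{R}/2\pi\mathbb{Z}$; fixed $0<\underline h\le\overline h$, $0<\underline w\le\overline w<2\pi$; $1_{[-w/2,w/2]}$ is periodized. FNO with grid size $N$: $x_j=2\pi j/N$, $\mathcal{F}_Nv(k)=\frac1N\sum_{j=1}^Nv(x_j)e^{-ikx_j}$; an FNO with lifting dimension $d_v$, cut-off $k_{\max}$, depth $L$, ReLU $\sigma$ is $Q\circ\mathcal{L}_L\circ\dots\circ\mathcal{L}_1\circ R$, $(R\bar u)(x)=R(\bar u(x),x)$ ($R$ a shallow ReLU network into $\mathbb{R}^{d_v}$), $(\mathcal{L}_\ell v)(x)=\sigma(W_\ell v(x)+b_\ell(x)+\sum_{|k|\le k_{\max}}P_\ell(k)\mathcal{F}_Nv(k)e^{ikx})$ with $W_\ell\in\mathbb{R}^{d_v\times d_v}$, $P_\ell(k)\in\mathbb{C}^{d_v\times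 d_v}$, real bias $b_\ell(x)=\sum_{|k|\le k_{\max}}\hat b_\ell(k)e^{ikx}$, $Q$ linear pointwise; outputs are defined for all $x\in\mathbb{T}$. Depth $=L$; size = number of tunable parameters. *)

(* Defs.v *)
From HB Require Import structures.
From mathcomp Require Import all_boot all_order all_algebra.
From mathcomp Require Import all_classical all_reals all_analysis.

Set Implicit Arguments.
Unset Strict Implicit.
Unset Printing Implicit Defensive.

Import Order.TTheory GRing.Theory Num.Theory.
Local Open Scope ring_scope.

Section FNO.
Variable R : realType.

Definition relu_v (n : nat) (v : 'cV[R]_n) : 'cV[R]_n :=
  map_mx (fun t => Num.max t 0) v.

(* the wave numbers |k| <= k_max = 1, indexed by k : 'I_3 as k - 1 *)
Definition wavenum (k : 'I_3) : R := (k%:R - 1).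

(* parameters of one Fourier layer L_l, with cut-off k_max = 1.
   Complex matrices P(k) and complex bias coefficients b^(k) are stored
   by their real and imaginary parts. *)
Record fno_layer (dv : nat) := FnoLayer {
  W_l  : 'M[R]_dv;
  Pre  : 'I_3 -> 'M[R]_dv;
  Pim  : 'I_3 -> 'M[R]_dv;
  bre  : 'I_3 -> 'cV[R]_dv;
  bim  : 'I_3 -> 'cV[R]_dv
}.

(* an FNO: lifting R (shallow ReLU network (u,x) |-> R^dv of width m),
   a list of Fourier layers, and a pointwise linear projection Q. *)
Record fno := Fno {
  dv : nat;
  lift_width : nat;
  RA : 'M[R]_(lift_width, 2);
  Rb : 'cV[R]_lift_width;
  RC : 'M[R]_(dv, lift_width);
  Rc : 'cV[R]_dv;
  layers : seq (fno_layer dv);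
  Qp : 'rV[R]_dv
}.

Definition depth (F : fno) : nat := size (layers F).

Definition fno_size (F : fno) : nat :=
  (lift_width F * 2 + lift_width F + dv F * lift_width F + dv F)
  + depth F * (dv F * dv F + 3 * 2 * (dv F * dv F) + 3 * 2 * dv F)
  + dv F.

(* grid points x_j = 2 pi j / N, j = 1..N *)
Definition grid (N : nat) (j : nat) : R := 2 * pi * j%:R / N%:R.

(* real and imaginary parts of the discrete Fourier coefficient
   F_N v(k) = 1/N sum_{j=1}^N v(x_j) e^{-i k x_j} *)
Definition dft_re (N : nat) (n : nat) (v : R -> 'cV[R]_n) (k : 'I_3) : 'cV[R]_n :=
  N%:R^-1 *: \sum_(1 <= j < N.+1) (cos (wavenum k * grid N j) *: v (grid N j)).
Definition dft_im (N : nat) (n : nat) (v : R -> 'cV[R]_n) (k : 'I_3) : 'cV[R]_n :=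
  - (N%:R^-1 *: \sum_(1 <= j < N.+1) (sin (wavenum k * grid N j) *: v (grid N j))).

(* real part of  sum_{|k|<=1} b^(k) e^{ikx} *)
Definition bias_eval (n : nat) (L : fno_layer n) (x : R) : 'cV[R]_n :=
  \sum_(k < 3) (cos (wavenum k * x) *: bre L k - sin (wavenum k * x) *: bim L k).

(* real part of  sum_{|k|<=1} P(k) F_N v(k) e^{ikx} *)
Definition spectral (N : nat) (n : nat) (L : fno_layer n) (v : R -> 'cV[R]_n)
    (x : R) : 'cV[R]_n :=
  \sum_(k < 3)
    (cos (wavenum k * x) *: (Pre L k *m dft_re N v k - Pim L k *m dft_im N v k)
     - sin (wavenum k * x) *: (Pre L k *m dft_im N v k + Pim L k *m dft_re N v k)).

Definition layer_apply (N : nat) (n : nat) (L : fno_layer n) (v : R -> 'cV[R]_n)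
    : R -> 'cV[R]_n :=
  fun x => relu_v (W_l L *m v x + bias_eval L x + spectral N L v x).

Definition lift_apply (F : fno) (u : R -> R) : R -> 'cV[R]_(dv F) :=
  fun x => RC F *m relu_v (RA F *m (\col_(i < 2) (if i == ord0 then u x else x)) + Rb F)
           + Rc F.

(* N^FNO(u)(x) = Q (L_L o ... o L_1 (R u))(x); layers listed in order L_1 ... L_L *)
Definition fno_eval (N : nat) (F : fno) (u : R -> R) (x : R) : R :=
  (Qp F *m foldl (fun v L => layer_apply N L v) (lift_apply F u) (layers F) x) ord0 ord0.

(* u = h 1_[-w/2,w/2](. - xi), with the indicator periodized *)
Definition periodic_box (h w xi : R) (x : R) : R :=
  if `[< exists k : int, `|x - xi - k%:~R * (2 * pi)| <= w / 2 >] then h else 0.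

End FNO.

(* Main.v *)
Require Import Defs.
From HB Require Import structures.
From mathcomp Require Import all_boot all_order all_algebra.
From mathcomp Require Import all_classical all_reals all_analysis.
From mathcomp Require Import ring lra zify.
Import Order.TTheory GRing.Theory Num.Theory.
Import numFieldNormedType.Exports.
Local Open Scope ring_scope.
Set Implicit Arguments.
Unset Strict Implicit.
Unset Printing Implicit Defensive.
Definition boxb (R : realType) (w xi t : R) : bool :=
  `[< exists k : int, `|t - xi - k%:~R * (2 * pi)| <= w / 2 >].

Lemma boxP (R : realType) (w xi t : R) :
  reflect (exists k : int, `|t - xi - k%:~R * (2 * pi)| <= w / 2) (boxb w xi t).
Proof. exact: asboolP. Qed.

Lemma box_shift (R : realType) (w xi t : R) (q : int) :
  boxb w xi (t + q%:~R * (2 * pi)) = boxb w xi t.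
Proof.
apply/boxP/boxP => [[k Hk]|[k Hk]].
  exists (k - q); rewrite intrB.
  by have -> : t - xi - (k%:~R - q%:~R) * (2 * pi) =
    t + q%:~R * (2 * pi) - xi - k%:~R * (2 * pi) by ring.
exists (k + q); rewrite intrD.
by have -> : t + q%:~R * (2 * pi) - xi - (k%:~R + q%:~R) * (2 * pi) =
    t - xi - k%:~R * (2 * pi) by ring.
Qed.

Lemma int_ge1 (R : realType) (r : int) : (0 < r)%R -> 1 <= (r%:~R : R).
Proof. by move=> h; rewrite -[1]/((1:int)%:~R) ler_int; lia. Qed.
Lemma int_leN1 (R : realType) (r : int) : (r < 0)%R -> (r%:~R : R) <= -1.
Proof. by move=> h; rewrite -[-1]/((-1:int)%:~R) ler_int; lia. Qed.

Lemma exit_iff (R : realType) (w xi d : R) (N : nat) (n : int) :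
  0 < d -> N%:R * d = 2 * pi -> d <= w -> w + d < 2 * pi ->
  (boxb w xi (n%:~R * d) && ~~ boxb w xi ((n + 1)%:~R * d)) =
  (N%:Z %| n - Num.floor ((xi + w / 2) / d))%Z.
Proof.
move=> d0 hN hdw hwd.
have pi0 : 0 < pi :> R by exact: pi_gt0.
have key : forall n0 k : int, (n0 - k * N%:Z)%:~R * d - xi = n0%:~R * d - xi - k%:~R * (2 * pi).
  by move=> n0 k; rewrite intrB intrM -hN; rewrite -[(N%:Z)%:~R]/(N%:R); ring.
set m := Num.floor _.
apply/idP/idP.
  move=> /andP [/boxP [k Hk] /boxP Hn].
  apply/dvdzP; exists k.
  suff -> : m = n - k * N%:Z by ring.
  apply: floor_def.
  have Hn' : ~ (`|(n + 1)%:~R * d - xi - k%:~R * (2 * pi)| <= w / 2).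
    by move=> H; apply: Hn; exists k.
  move: Hk Hn'; rewrite -key -key.
  have -> : (n + 1 - k * N%:Z)%:~R * d - xi =
     (n - k * N%:Z)%:~R * d + d - xi by rewrite !intrB intrD1; ring.
  rewrite intrD1 ler_norml.
  move: ((n - k * N%:Z)%:~R) => P /andP [h1 h2] /negP h3.
  rewrite ler_norml negb_and in h3.
  rewrite ler_pdivlMr // ltr_pdivrMr //.
  apply/andP; split; first lra.
  case/orP: (h3) => /negP h4; lra.
move=> /dvdzP [q hq].
have hn : n = m + q * N%:Z by rewrite -hq; ring.
have := floor_itv ((xi + w / 2) / d); rewrite -/m intrD1.
rewrite ler_pdivlMr // ltr_pdivrMr // => /andP [h1 h2].
apply/andP; split.
  apply/boxP; exists q.
  rewrite -key.
  have -> : n - q * N%:Z = m by rewrite hn; ring.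
  rewrite ler_norml; apply/andP; split; lra.
apply/negP => /boxP [k Hk].
move: Hk; rewrite -key.
have -> : (n + 1) - k * N%:Z = m + 1 + (q - k) * N%:Z by rewrite hn; ring.
rewrite intrD intrD1 intrM -[(N%:Z)%:~R]/(N%:R).
have -> : ((m%:~R + 1 + (q - k)%:~R * N%:R) * d - xi) =
  (m%:~R * d + d - xi) + (q - k)%:~R * (2 * pi) by rewrite -hN; ring.
rewrite ler_norml.
move: (q - k) => r.
case: (ltgtP r 0) => hr.
- have := int_leN1 R hr; move: (r%:~R) => x hx.
  move=> /andP [h3 h4]. nra.
- have := int_ge1 R hr; move: (r%:~R) => x hx.
  move=> /andP [h3 h4]. nra.
- rewrite hr mul0r addr0 => /andP [h3 h4]. lra.
Qed.

Lemma entry_iff (R : realType) (w xi d : R) (N : nat) (n : int) :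
  0 < d -> N%:R * d = 2 * pi -> d <= w -> w + d < 2 * pi ->
  (~~ boxb w xi (n%:~R * d) && boxb w xi ((n + 1)%:~R * d)) =
  (N%:Z %| n + Num.floor (- (xi - w / 2) / d) + 1)%Z.
Proof.
move=> d0 hN hdw hwd.
have pi0 : 0 < pi :> R by exact: pi_gt0.
have key : forall n0 k : int, (n0 - k * N%:Z)%:~R * d - xi = n0%:~R * d - xi - k%:~R * (2 * pi).
  by move=> n0 k; rewrite intrB intrM -hN; rewrite -[(N%:Z)%:~R]/(N%:R); ring.
set f := Num.floor _.
apply/idP/idP.
  move=> /andP [/boxP Hn /boxP [k Hk]].
  apply/dvdzP; exists k.
  suff -> : f = - (n - k * N%:Z) - 1 by ring.
  apply: floor_def.
  have Hn' : ~ (`|n%:~R * d - xi - k%:~R * (2 * pi)| <= w / 2).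
    by move=> H; apply: Hn; exists k.
  move: Hk Hn'; rewrite -key -key.
  have -> : (n + 1 - k * N%:Z)%:~R * d - xi =
     (n - k * N%:Z)%:~R * d + d - xi by rewrite !intrB intrD1; ring.
  rewrite ler_norml.
  have -> : (- (n - k * N%:Z) - 1 + 1) = - (n - k * N%:Z) by ring.
  have e1 : ((- (n - k * N%:Z) - 1)%:~R : R) = - (n - k * N%:Z)%:~R - 1.
    by rewrite [LHS]intrB mulrNz.
  rewrite e1 ?mulrNz.
  move: ((n - k * N%:Z)%:~R) => P /andP [h1 h2] /negP h3.
  rewrite ler_norml negb_and in h3.
  rewrite ler_pdivlMr // ltr_pdivrMr //.
  apply/andP; split; first lra.
  case/orP: (h3) => /negP h4; lra.
move=> /dvdzP [q hq].
have hn : n = - f - 1 + q * N%:Z by rewrite -[q * _]hq; ring.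
have := floor_itv (- (xi - w / 2) / d); rewrite -/f intrD1.
rewrite ler_pdivlMr // ltr_pdivrMr // => /andP [h1 h2].
apply/andP; split.
  apply/negP => /boxP [k Hk].
  move: Hk; rewrite -key.
  have -> : n - k * N%:Z = - f - 1 + (q - k) * N%:Z by rewrite hn; ring.
  rewrite intrD intrB mulrNz intrM -[(N%:Z)%:~R]/(N%:R).
  have -> : ((- f%:~R - 1%:~R + (q - k)%:~R * N%:R) * d - xi) =
    (- f%:~R * d - d - xi) + (q - k)%:~R * (2 * pi) by rewrite -hN; ring.
  rewrite ler_norml.
  move: (q - k) => r.
  case: (ltgtP r 0) => hr.
  - have := int_leN1 R hr; move: (r%:~R) => x hx.
    move=> /andP [h3 h4]. nra.
  - have := int_ge1 R hr; move: (r%:~R) => x hx.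
    move=> /andP [h3 h4]. nra.
  - rewrite hr mul0r addr0 => /andP [h3 h4]. lra.
apply/boxP; exists q.
rewrite -key.
have -> : n + 1 - q * N%:Z = - f by rewrite hn; ring.
rewrite mulrNz ler_norml; apply/andP; split; lra.
Qed.
Lemma sin_perZ (R : realType) (a : R) (q : int) :
  sin (a + q%:~R * (2 * pi)) = sin a.
Proof.
have h2 : (2 * pi : R) = pi *+ 2 by rewrite mulr_natl.
case: q => n.
  by rewrite -[(Posz n)%:~R]/(n%:R : R) !mulr_natl; exact: periodicn (@sinD2pi R) n a.
rewrite NegzE mulrNz -[(Posz n.+1)%:~R]/(n.+1%:R : R) mulNr !mulr_natl.
have := periodicn (@sinD2pi R) n.+1 (a - (pi *+ 2) *+ n.+1).
by rewrite subrK => ->.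
Qed.

Lemma count1 (R : realType) (N : nat) (m : int) (c : R) : (0 < N)%N ->
  \sum_(1 <= j < N.+1) (if (N%:Z %| j%:Z - m)%Z then c else 0) = c.
Proof.
move=> h0.
have [j0 [hj0 hd0]] : exists j0 : nat, (1 <= j0 <= N)%N /\ (N%:Z %| j0%:Z - m)%Z.
  exists (if (m %% N%:Z)%Z == 0 then N else `|(m %% N%:Z)%Z|%N).
  have h1 : (0 < N%:Z)%R by lia.
  have hge := modz_ge0 m (lt0r_neq0 h1).
  have hlt := ltz_pmod m h1.
  have hdiv := divz_eq m N%:Z.
  case: ifP => /eqP h; split; try lia; apply/dvdzP.
    exists (1 - (m %/ N%:Z)%Z); lia.
  exists (- (m %/ N%:Z)%Z); lia.
rewrite (bigD1_seq j0) /=; last exact: iota_uniq.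
  rewrite hd0 big1_seq ?addr0 // => j /andP [hne hin].
  case: ifP => // hdj; exfalso; move/negP: hne; apply; apply/eqP.
  move: hin; rewrite mem_index_iota => hin.
  move: hdj hd0 => /dvdzP [a ha] /dvdzP [b hb].
  have e : (j%:Z - j0%:Z = (a - b) * N%:Z)%R by rewrite mulrBl -ha -hb; ring.
  case: (ltgtP (a - b) 0) => hab; nia.
by rewrite mem_index_iota; lia.
Qed.
Lemma sin_lip (R : realType) (a b : R) : `|sin b - sin a| <= `|b - a|.
Proof.
wlog ab : a b / a <= b.
  move=> H; case: (leP a b) => [/H//|/ltW ba].
  by rewrite distrC [`|b - a|]distrC; apply: H.
have [c _ ->] : exists2 c, c \in `[a, b]%R & sin b - sin a = cos c * (b - a).
  apply: (@MVT_segment R sin cos a b ab (fun x _ => is_derive_sin x)).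
  by apply/continuous_subspaceT=> ?; exact: continuous_sin.
rewrite normrM -[X in _ <= X]mul1r ler_wpM2r //.
by rewrite cos_max.
Qed.

Lemma core (R : realType) (w xi psi d : R) (N : nat) :
  0 < d -> N%:R * d = 2 * pi -> d <= w -> w + d < 2 * pi ->
  `| 2 * sin (d / 2) * \sum_(1 <= j < N.+1)
        (if boxb w xi (j%:R * d) then cos (j%:R * d - psi) else 0)
     - 2 * sin (w / 2) * cos (xi - psi)| <= d.
Proof.
move=> d0 hN hdw hwd.
have pi0 : 0 < pi :> R by exact: pi_gt0.
have N0 : (0 < N)%N.
  by case: N hN => [|n] //; rewrite mul0r => h; lra.
set chi := fun j : nat => (if boxb w xi (j%:R * d) then 1 else 0 : R).
set G := fun j : nat => sin (j%:R * d + d / 2 - psi).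
set m := Num.floor ((xi + w / 2) / d).
set f := Num.floor (- (xi - w / 2) / d).
set Gex := sin (m%:~R * d + d / 2 - psi).
set Gen := sin ((- f - 1)%:~R * d + d / 2 - psi).
have S1 : 2 * sin (d / 2) * \sum_(1 <= j < N.+1)
        (if boxb w xi (j%:R * d) then cos (j%:R * d - psi) else 0) =
    \sum_(1 <= j < N.+1) chi j * (G j - G j.-1).
  rewrite big_distrr /=; apply: eq_big_nat => j /andP [hj _].
  rewrite /chi /G; case: ifP => _; last by rewrite mulr0 mul0r.
  case: j hj => // j _ /=.
  have -> : j.+1%:R * d + d / 2 - psi = (j.+1%:R * d - psi) + d / 2 by field.
  have -> : j%:R * d + d / 2 - psi = (j.+1%:R * d - psi) - d / 2 by field.
  rewrite (sinD (j.+1%:R * d - psi)) (sinB (j.+1%:R * d - psi)); ring.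
have S2 : \sum_(1 <= j < N.+1) chi j * (G j - G j.-1) =
    \sum_(1 <= j < N.+1) (chi j - chi j.+1) * G j.
  case: N N0 hN {S1} => // n _ hN.
  have -> : \sum_(1 <= j < n.+2) chi j * (G j - G j.-1) =
     \sum_(1 <= j < n.+2) chi j * G j - \sum_(1 <= j < n.+2) chi j * G j.-1.
    by rewrite -sumrB; apply: eq_bigr => j _; ring.
  have -> : \sum_(1 <= j < n.+2) (chi j - chi j.+1) * G j =
     \sum_(1 <= j < n.+2) chi j * G j - \sum_(1 <= j < n.+2) chi j.+1 * G j.
    by rewrite -sumrB; apply: eq_bigr => j _; ring.
  congr (_ - _).
  rewrite [LHS]big_nat_recl // [RHS]big_nat_recr //=.
  suff -> : chi 1 * G 0 = chi n.+2 * G n.+1 by rewrite addrC.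
  congr (_ * _).
    rewrite /chi.
    have -> : (n.+2%:R * d : R) = 1%:R * d + (1%:Z)%:~R * (2 * pi).
      by rewrite -hN; ring.
    by rewrite box_shift.
  rewrite /G.
  have -> : (n.+1%:R * d + d / 2 - psi : R) = (0%:R * d + d / 2 - psi) + (1%:Z)%:~R * (2 * pi).
    by rewrite -hN; ring.
  by rewrite sin_perZ.
have S3 : forall j : nat, (chi j - chi j.+1) * G j =
    (if (N%:Z %| j%:Z - m)%Z then Gex else 0) -
    (if (N%:Z %| j%:Z + f + 1)%Z then Gen else 0).
  move=> j.
  have ex := @exit_iff R w xi d N j d0 hN hdw hwd.
  have en := @entry_iff R w xi d N j d0 hN hdw hwd.
  have e1 : (((j%:Z + 1)%:~R) : R) = j.+1%:R by rewrite intrD1 natr1.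
  rewrite e1 -/m in ex; rewrite e1 -/f in en.
  rewrite /chi.
  move: ex en; rewrite -[((Posz j)%:~R : R)]/(j%:R : R).
  case: (boxb w xi (j%:R * d)); case: (boxb w xi (j.+1%:R * d)) => /= hex hen;
    rewrite -hex -hen.
  - ring.
  - rewrite subr0 mul1r subr0 /G /Gex.
    move/esym: hex => /dvdzP [q hq].
    have hj : (j%:R : R) = m%:~R + q%:~R * N%:R.
      have : (j%:Z) = m + q * N%:Z by rewrite -hq; ring.
      by move/(congr1 (fun z : int => (z%:~R : R))); rewrite intrD intrM.
    rewrite hj.
    have -> : (m%:~R + q%:~R * N%:R) * d + d / 2 - psi =
       (m%:~R * d + d / 2 - psi) + q%:~R * (2 * pi) by rewrite -hN; ring.
    exact: sin_perZ.
  - rewrite sub0r mulN1r sub0r /G /Gen.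
    move/esym: hen => /dvdzP [q hq].
    have hj : (j%:R : R) = (- f - 1)%:~R + q%:~R * N%:R.
      have : (j%:Z) = (- f - 1) + q * N%:Z by rewrite -hq; ring.
      by move/(congr1 (fun z : int => (z%:~R : R))); rewrite intrD intrM.
    rewrite hj.
    have -> : ((- f - 1)%:~R + q%:~R * N%:R) * d + d / 2 - psi =
       ((- f - 1)%:~R * d + d / 2 - psi) + q%:~R * (2 * pi) by rewrite -hN; ring.
    by rewrite sin_perZ.
  - ring.
rewrite S1 S2 (eq_bigr _ (fun j _ => S3 j)) sumrB count1 //.
have C2 : \sum_(1 <= i < N.+1) (if (N%:Z %| i%:Z + f + 1)%Z then Gen else 0) = Gen.
  rewrite -[RHS](@count1 R N (- f - 1) Gen N0); apply: eq_bigr => i _.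
  by have -> : (i%:Z + f + 1 = i%:Z - (- f - 1))%R by ring.
rewrite C2.
have T : 2 * sin (w / 2) * cos (xi - psi) =
    sin (xi + w / 2 - psi) - sin (xi - w / 2 - psi).
  have -> : xi + w / 2 - psi = (xi - psi) + w / 2 by ring.
  have -> : xi - w / 2 - psi = (xi - psi) - w / 2 by ring.
  rewrite (sinD (xi - psi)) (sinB (xi - psi)); ring.
have := floor_itv ((xi + w / 2) / d); rewrite -/m intrD1.
rewrite ler_pdivlMr // ltr_pdivrMr // => /andP [a1 a2].
have := floor_itv (- (xi - w / 2) / d); rewrite -/f intrD1.
rewrite ler_pdivlMr // ltr_pdivrMr // => /andP [b1 b2].
have hb1 : `|Gex - sin (xi + w / 2 - psi)| <= d / 2.
  apply: le_trans (sin_lip _ _) _.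
  rewrite ler_norml; apply/andP; split; lra.
have hb2 : `|Gen - sin (xi - w / 2 - psi)| <= d / 2.
  apply: le_trans (sin_lip _ _) _.
  have -> : ((- f - 1)%:~R * d : R) = - (f%:~R * d) - d.
    by rewrite intrB mulrNz; ring.
  rewrite ler_norml; apply/andP; split; lra.
rewrite T.
have -> : Gex - Gen - (sin (xi + w / 2 - psi) - sin (xi - w / 2 - psi)) =
  (Gex - sin (xi + w / 2 - psi)) - (Gen - sin (xi - w / 2 - psi)) by ring.
apply: le_trans (ler_normB _ _) _; lra.
Qed.

Definition sg2 (R : realType) (i : 'I_2) : R := if i == ord0 then 1 else -1.

Definition mkF (R : realType) (hlo a b : R) : fno R :=
  @Fno R 2 2
    (\matrix_(i, j) (if j == ord0 then hlo^-1 else 0))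
    (\col_i (if i == ord0 then 0 else -1))
    (\matrix_(i, j) sg2 R j)
    0
    [:: @FnoLayer R 2 0
         (fun k => if k == ord_max then a *: \matrix_(i, j) (if j == ord0 then sg2 R i else 0) else 0)
         (fun k => if k == ord_max then b *: \matrix_(i, j) (if j == ord0 then sg2 R i else 0) else 0)
         (fun _ => 0) (fun _ => 0)]
    (\row_j sg2 R j).

Definition chi (R : realType) (w xi t : R) : R :=
  if `[< exists k : int, `|t - xi - k%:~R * (2 * pi)| <= w / 2 >] then 1 else 0.

Lemma lift_mkF (R : realType) (hlo a b h w xi : R) y (i : 'I_2) :
  0 < hlo -> hlo <= h ->
  lift_apply (mkF hlo a b) (periodic_box h w xi) y i ord0 = chi w xi y.
Proof.
move=> h0 hh.
rewrite /lift_apply /= !mxE !big_ord_recl big_ord0 /= /relu_v !mxE.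
rewrite !big_ord_recl big_ord0 /= !mxE /=.
rewrite !big_ord0 /sg2 /chi /periodic_box /=.
rewrite !mul0r !addr0 ?mulr0.
have hq : 1 <= hlo^-1 * h by rewrite mulrC ler_pdivlMr // mul1r.
case: ifP => _.
  rewrite max_l; last lra.
  rewrite max_l; last lra.
  ring.
rewrite ?mulr0 ?addr0 max_l // max_r; last lra.
ring.
Qed.

Lemma eval_mkF (R : realType) (N : nat) (hlo a b h w xi x : R) :
  0 < hlo -> hlo <= h ->
  fno_eval N (mkF hlo a b) (periodic_box h w xi) x =
  cos x * (a * (N%:R^-1 * \sum_(1 <= j < N.+1) (cos (grid R N j) * chi w xi (grid R N j)))
         - b * (- (N%:R^-1 * \sum_(1 <= j < N.+1) (sin (grid R N j) * chi w xi (grid R N j)))))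
  - sin x * (a * (- (N%:R^-1 * \sum_(1 <= j < N.+1) (sin (grid R N j) * chi w xi (grid R N j))))
         + b * (N%:R^-1 * \sum_(1 <= j < N.+1) (cos (grid R N j) * chi w xi (grid R N j)))).
Proof.
move=> h0 hh.
rewrite /fno_eval /=.
set v := lift_apply _ _.
have hv : forall y i, v y i ord0 = chi w xi y by move=> y i; exact: lift_mkF.
have w1 : wavenum R ord_max = 1.
  by rewrite /wavenum /=; ring.
have dre : forall i, dft_re N v ord_max i ord0 =
    N%:R^-1 * \sum_(1 <= j < N.+1) (cos (grid R N j) * chi w xi (grid R N j)).
  move=> i; rewrite /dft_re mxE summxE w1; congr (_ * _); apply: eq_bigr => j _.
  by rewrite mxE hv mul1r.
have dim : forall i, dft_im N v ord_max i ord0 =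
    - (N%:R^-1 * \sum_(1 <= j < N.+1) (sin (grid R N j) * chi w xi (grid R N j))).
  move=> i; rewrite /dft_im mxE mxE summxE w1; congr (- (_ * _)); apply: eq_bigr => j _.
  by rewrite mxE hv mul1r.
set cre := N%:R^-1 * _.
set cim := - (N%:R^-1 * _).
set L := (X in layer_apply N X v x).
have sp : forall i, spectral N L v x i ord0 =
    sg2 R i * (cos x * (a * cre - b * cim) - sin x * (a * cim + b * cre)).
  move=> i; rewrite /spectral summxE (bigD1 ord_max) //= big1 ?addr0; last first.
    move=> k /negbTE hk; rewrite hk !mul0mx !mxE; ring.
  have sc : forall i, (\sum_(1 <= j < N.+1) cos (wavenum R ord_max * grid R N j) *: v (grid R N j)) i ord0
     = \sum_(1 <= j < N.+1) (cos (grid R N j) * chi w xi (grid R N j)).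
    move=> i0; rewrite summxE; apply: eq_bigr => j _.
    by rewrite mxE hv w1 mul1r.
  have ss : forall i, (\sum_(1 <= j < N.+1) sin (wavenum R ord_max * grid R N j) *: v (grid R N j)) i ord0
     = \sum_(1 <= j < N.+1) (sin (grid R N j) * chi w xi (grid R N j)).
    move=> i0; rewrite summxE; apply: eq_bigr => j _.
    by rewrite mxE hv w1 mul1r.
  rewrite !mxE !big_ord_recl !big_ord0 /= !mxE /= !sc !ss w1 !mul1r /cre /cim.
  ring.
have hb : bias_eval L x = 0.
  by rewrite /bias_eval big1 // => k _; rewrite /= !scaler0 subrr.
rewrite /layer_apply hb mul0mx !add0r /relu_v.
rewrite !mxE !big_ord_recl !big_ord0 /= !mxE !sp /sg2 /=.
set S := (cos x * _ - _).
rewrite !mul1r !mulN1r ?addr0.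
have [hS|hS] : 0 <= S \/ S < 0 by case: (leP 0 S); [left|right].
  rewrite max_l // max_r; [ring | lra].
rewrite max_r; last lra.
rewrite max_l; [ring | lra].
Qed.

Definition Mc (R : realType) (wlo whi : R) : R := 2 * pi / wlo + 4 * pi / (2 * pi - whi).

Lemma core2 (R : realType) (wlo whi w xi psi : R) (N : nat) :
  0 < wlo -> wlo <= w -> w <= whi -> whi < 2 * pi -> (0 < N)%N ->
  `| 2 * sin ((2 * pi / N%:R) / 2) * \sum_(1 <= j < N.+1)
        (if boxb w xi (j%:R * (2 * pi / N%:R)) then cos (j%:R * (2 * pi / N%:R) - psi) else 0)
     - 2 * sin (w / 2) * cos (xi - psi)| <= (2 * pi + (2 * Mc wlo whi + 2) * Mc wlo whi) / N%:R.
Proof.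
move=> h0 h1 h2 h3 hN.
set d := 2 * pi / N%:R.
set M := Mc wlo whi.
have pi0 : 0 < pi :> R by exact: pi_gt0.
have N0 : 0 < N%:R :> R by rewrite ltr0n.
have d0 : 0 < d by rewrite /d divr_gt0 //; lra.
have hNd : N%:R * d = 2 * pi by rewrite /d mulrC divfK // gt_eqF.
have M1 : 0 < 2 * pi / wlo by rewrite divr_gt0 //; lra.
have M2 : 0 < 4 * pi / (2 * pi - whi) by rewrite divr_gt0 //; lra.
have [good|bad] : (d <= wlo /\ d <= (2 * pi - whi) / 2) \/
                  (N%:R < M).
  case: (leP d wlo) => hd1; last first.
    right; rewrite /M /Mc; suff : N%:R < 2 * pi / wlo by lra.
    by rewrite ltr_pdivlMr // -hNd ltr_pM2l.
  case: (leP d ((2 * pi - whi) / 2)) => hd2; first by left.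
  right; rewrite /M /Mc; suff : N%:R < 4 * pi / (2 * pi - whi) by lra.
  rewrite ltr_pdivlMr; last lra.
  have : N%:R * ((2 * pi - whi) / 2) < N%:R * d by rewrite ltr_pM2l.
  rewrite hNd; lra.
  case: good => g1 g2.
  have hc := @core R w xi psi d N d0 hNd ltac:(lra) ltac:(lra).
  apply: (le_trans hc).
  rewrite /d ler_wpM2r //.
  have : 0 <= (2 * M + 2) * M by apply: mulr_ge0; rewrite /M /Mc; lra.
  lra.
have hs : `|\sum_(1 <= j < N.+1)
        (if boxb w xi (j%:R * d) then cos (j%:R * d - psi) else 0)| <= N%:R.
  apply: le_trans (ler_norm_sum _ _ _) _.
  have -> : (N%:R : R) = \sum_(1 <= j < N.+1) (1 : R).
    by rewrite sumr_const_nat subn1 /=.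
  apply: ler_sum => j _; case: ifP => _; last by rewrite normr0.
  exact: cos_max.
have hA : `|2 * sin (d / 2) * \sum_(1 <= j < N.+1)
        (if boxb w xi (j%:R * d) then cos (j%:R * d - psi) else 0)| <= 2 * N%:R.
  rewrite normrM; apply: ler_pM => //.
  by rewrite normrM ger0_norm // -[2 in X in _ <= X]mulr1 ler_wpM2l // sin_max.
have hB : `|2 * sin (w / 2) * cos (xi - psi)| <= 2.
  rewrite !normrM ger0_norm // -[2 in X in _ <= X]mulr1 -mulrA ler_wpM2l //.
  by rewrite -[1]mulr1 ler_pM // ?sin_max ?cos_max.
apply: le_trans (ler_normB _ _) _.
rewrite ler_pdivlMr //.
have : (2 * N%:R + 2) * N%:R <= 2 * pi + (2 * M + 2) * M.
  have : 0 <= N%:R :> R by lra.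
  nra.
nra.
Qed.

Lemma mul_le1 (R : realType) (x y E : R) : `|x| <= 1 -> `|y| <= E -> `|x * y| <= E.
Proof.
rewrite normrM => h1 h2; rewrite -[E]mul1r; apply: ler_pM => //.
Qed.

Theorem mainTheorem11 (R : realType) (hlo hhi wlo whi theta : R) :
  0 < hlo -> hlo <= hhi -> 0 < wlo -> wlo <= whi -> whi < 2 * pi ->
  exists C : R, 0 < C /\
    forall N : nat, (0 < N)%N ->
      exists F : fno R,
        (dv F)%:R <= C /\ (depth F)%:R <= C /\ (fno_size F)%:R <= C /\
        forall h w xi x : R,
          hlo <= h -> h <= hhi -> wlo <= w -> w <= whi ->
          0 <= xi -> xi <= 2 * pi -> 0 <= x -> x <= 2 * pi ->
          `| fno_eval N F (periodic_box h w xi) x - sin (w / 2) * cos (x - xi - theta) |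
            <= C / N%:R.
Proof.
move=> h0 hh w0 hw hw2.
have pi0 : 0 < pi :> R by exact: pi_gt0.
set M := Mc wlo whi.
set K0 := 2 * pi + (2 * M + 2) * M.
have M0 : 0 < M.
  rewrite /M /Mc; apply: addr_gt0; apply: divr_gt0; lra.
have K00 : 0 < K0 by rewrite /K0; nra.
exists (54 + 2 * K0); split; first lra.
move=> N hN.
pose d : R := 2 * pi / N%:R.
pose lam : R := N%:R * sin (d / 2).
exists (mkF hlo (lam * cos theta) (- (lam * sin theta))).
split; [|split; [|split]].
- rewrite /=; lra.
- rewrite /depth /=; lra.
- have -> : fno_size (mkF hlo (lam * cos theta) (- (lam * sin theta))) = 54%N by [].
  lra.
move=> h w xi x hh1 hh2 hw1 hw2' _ _ _ _.
rewrite eval_mkF //.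
have N0 : 0 < N%:R :> R by rewrite ltr0n.
have gE : forall j : nat, grid R N j = j%:R * d by move=> j; rewrite /grid /d; ring.
set Sc := \sum_(1 <= j < N.+1) (cos (grid R N j) * chi w xi (grid R N j)).
set Ss := \sum_(1 <= j < N.+1) (sin (grid R N j) * chi w xi (grid R N j)).
have c1 := @core2 R wlo whi w xi 0 N w0 hw1 hw2' hw2 hN.
have c2 := @core2 R wlo whi w xi (pi / 2) N w0 hw1 hw2' hw2 hN.
have eSc : \sum_(1 <= j < N.+1) (if boxb w xi (j%:R * (2 * pi / N%:R))
    then cos (j%:R * (2 * pi / N%:R) - 0) else 0) = Sc.
  rewrite /Sc; apply: eq_bigr => j _; rewrite gE /chi /boxb subr0 /d.
  by case: ifP => _; ring.
have eSs : \sum_(1 <= j < N.+1) (if boxb w xi (j%:R * (2 * pi / N%:R))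
    then cos (j%:R * (2 * pi / N%:R) - pi / 2) else 0) = Ss.
  rewrite /Ss; apply: eq_bigr => j _; rewrite gE /chi /boxb cosBpihalf /d.
  by case: ifP => _; ring.
rewrite eSc subr0 -/d -/M -/K0 in c1.
rewrite eSs cosBpihalf -/d -/M -/K0 in c2.
set E := K0 / N%:R.
set e1 := sin (d / 2) * Sc - sin (w / 2) * cos xi.
set e2 := - (sin (d / 2) * Ss) + sin (w / 2) * sin xi.
have he1 : `|e1| <= E / 2.
  move: c1; rewrite !ler_norml /e1 => /andP [u1 u2]; rewrite /E; apply/andP; split; lra.
have he2 : `|e2| <= E / 2.
  move: c2; rewrite !ler_norml /e2 => /andP [u1 u2]; rewrite /E; apply/andP; split; lra.
have -> : cos x * (lam * cos theta * (N%:R^-1 * Sc) - - (lam * sin theta) * - (N%:R^-1 * Ss)) -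
    sin x * (lam * cos theta * - (N%:R^-1 * Ss) + - (lam * sin theta) * (N%:R^-1 * Sc)) -
    sin (w / 2) * cos (x - xi - theta) =
    cos x * (cos theta * e1 + sin theta * e2) - sin x * (cos theta * e2 - sin theta * e1).
  have -> : x - xi - theta = x - (xi + theta) by ring.
  rewrite cosB cosD sinD /lam /e1 /e2.
  by field; rewrite gt_eqF.
have hA : `|cos theta * e1 + sin theta * e2| <= E.
  apply: le_trans (ler_normD _ _) _.
  have := mul_le1 (cos_max theta) he1; have := mul_le1 (sin_max theta) he2; lra.
have hB : `|cos theta * e2 - sin theta * e1| <= E.
  apply: le_trans (ler_normB _ _) _.
  have := mul_le1 (cos_max theta) he2; have := mul_le1 (sin_max theta) he1; lra.
apply: le_trans (ler_normB _ _) _.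
have := mul_le1 (cos_max x) hA; have := mul_le1 (sin_max x) hB.
have : E <= K0 / N%:R by [].
have : 2 * (K0 / N%:R) <= (54 + 2 * K0) / N%:R.
  rewrite mulrA ler_wpM2r //.
  lra.
lra.
Qed.
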